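(* Let $\mathcal H$ be a Hilbert space and $U$ a unitary on $\mathcal H$. Let $\phi:B(\mathcal H)\to B(\mathcal H)$ be a completely positive map and let $\psi:B(\mathcal H)\to B(\mathcal H)$, $\psi(X):=U\phi(U^*X)$, have the form $$\psi(X)=\sum_{i=1}^l R_i^{\#}XR_i\quad(X\in B(\mathcal H)),\qquad R_i^{\#}=UR_i^*U^*,$$ for some $R_1,\dots,R_l\in B(\mathcal H)$. Let $p\in\mathbb N$. Then the following are equivalent: (1) $\psi^p(X)=0$ for all $X\in B(\mathcal H)$, where $\psi^p$ is the $p$-fold composition of $\psi$; (2) $R_{i_1}R_{i_2}\cdots R_{i_p}=0$ for all $i_1,\dots,i_p\in\{1,\dots,l\}$. *)

(* Defs.v *)
(* a Hilbert space over C = R[i] (R : realType), described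
   by an inner product on an lmodType, with completeness; bounded operators
   are (bounded, linear) functions V -> V. *)
From HB Require Import structures.
From mathcomp Require Import all_boot all_order all_algebra.
From mathcomp Require Import complex.
From mathcomp Require Import reals.
Set Implicit Arguments. Unset Strict Implicit. Unset Printing Implicit Defensive.
Import Order.TTheory GRing.Theory Num.Theory.
Local Open Scope ring_scope.

Section Hilbert.
Variables (R : realType) (V : lmodType R[i]) (ip : V -> V -> R[i]).

Definition is_inner_product : Prop :=
  [/\ (forall (a : R[i]) (x y z : V), ip (a *: x + y) z = a * ip x z + ip y z),
      (forall x y : V, ip y x = (ip x y)^*),
      (forall x : V, 0 <= ip x x) &
      (forall x : V, ip x x = 0 -> x = 0)].

Definition normH (x : V) : R := Num.sqrt (complex.Re (ip x x)).

Definition cauchy_seq (u : nat -> V) : Prop :=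
  forall e : R, 0 < e -> exists N : nat,
    forall m n, (N <= m)%N -> (N <= n)%N -> normH (u m - u n) < e.

Definition converges_to (u : nat -> V) (l : V) : Prop :=
  forall e : R, 0 < e -> exists N : nat, forall n, (N <= n)%N -> normH (u n - l) < e.

Definition is_hilbert : Prop :=
  is_inner_product /\
  (forall u : nat -> V, cauchy_seq u -> exists l, converges_to u l).

Definition bounded_op (T : V -> V) : Prop :=
  (forall (a : R[i]) (x y : V), T (a *: x + y) = a *: T x + T y) /\
  (exists M : R, forall x, normH (T x) <= M * normH x).

Definition is_adjoint (T S : V -> V) : Prop :=
  forall x y : V, ip (T x) y = ip x (S y).

Definition unitary (U Ustar : V -> V) : Prop :=
  [/\ bounded_op U, is_adjoint U Ustar,
      (forall x, U (Ustar x) = x) & (forall x, Ustar (U x) = x)].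

(* an n x n operator matrix T (an element of M_n(B(H)) acting on H^n) is
   positive *)
Definition op_matrix_pos (n : nat) (T : 'I_n -> 'I_n -> V -> V) : Prop :=
  forall x : 'I_n -> V, 0 <= \sum_(i < n) \sum_(j < n) ip (T i j (x j)) (x i).

Definition completely_positive (phi : (V -> V) -> (V -> V)) : Prop :=
  [/\ (forall X, bounded_op X -> bounded_op (phi X)),
      (forall (a : R[i]) X Y, bounded_op X -> bounded_op Y ->
         forall v, phi (fun w => a *: X w + Y w) v = a *: phi X v + phi Y v) &
      (forall (n : nat) (T : 'I_n -> 'I_n -> V -> V),
         (forall i j, bounded_op (T i j)) -> op_matrix_pos T ->
         op_matrix_pos (fun i j => phi (T i j)))].

End Hilbert.

Definition psi_of (V : Type) (U Ustar : V -> V) (phi : (V -> V) -> (V -> V))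
  (X : V -> V) : V -> V := U \o phi (Ustar \o X).

(* R_{i_1} R_{i_2} ... R_{i_p} for s = [:: i_1; ...; i_p] *)
Definition prod_ops (V : Type) (l : nat) (Rs : 'I_l -> V -> V) (s : seq 'I_l)
  : V -> V := foldr (fun i f => Rs i \o f) id s.

(* Main.v *)
Require Import Defs.
From HB Require Import structures.
From mathcomp Require Import all_boot all_order all_algebra.
From mathcomp Require Import complex.
From mathcomp Require Import reals.
Import Order.TTheory GRing.Theory Num.Theory.
Local Open Scope ring_scope.

Lemma prod_ops_gen (V : Type) (l : nat) (Rs : 'I_l -> V -> V) (s : seq 'I_l)
  (g : V -> V) v :
  foldr (fun i f => Rs i \o f) g s v = prod_ops Rs s (g v).
Proof. by elim: s => [|i s IH] //=; rewrite IH. Qed.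

Lemma prod_ops_rcons (V : Type) (l : nat) (Rs : 'I_l -> V -> V) (s : seq 'I_l)
  i v : prod_ops Rs (rcons s i) v = prod_ops Rs s (Rs i v).
Proof. by rewrite /prod_ops foldr_rcons prod_ops_gen. Qed.

Theorem proposition4p2 (R : realType) (V : lmodType R[i]) (ip : V -> V -> R[i])
  (hH : is_hilbert ip)
  (U Ustar : V -> V) (hU : unitary ip U Ustar)
  (phi : (V -> V) -> (V -> V)) (hphi : completely_positive ip phi)
  (l : nat) (Rs Rss : 'I_l -> V -> V)
  (hR : forall i, bounded_op ip (Rs i))
  (hRs : forall i, is_adjoint ip (Rs i) (Rss i))
  (hpsi : forall X, bounded_op ip X -> forall v,
     psi_of U Ustar phi X v = \sum_(i < l) U (Rss i (Ustar (X (Rs i v)))))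
  (p : nat) :
  (forall X, bounded_op ip X -> forall v, iter p (psi_of U Ustar phi) X v = 0)
  <-> (forall (s : p.-tuple 'I_l) (v : V), prod_ops Rs s v = 0).
Proof.
case: hH => [[ipl ipc ipp ipd] _].
case: hU => [hUb hUa UUs UsU].
case: hphi => [phib _ _].
set psi := psi_of U Ustar phi.
have lin0 : forall X, bounded_op ip X -> X 0 = 0.
  move=> X [hl _]; have := hl 1 0 0; rewrite !scale1r addr0 => h.
  by apply: (@addrI _ (X 0)); rewrite addr0 -h.
have ip0l : forall w, ip 0 w = 0.
  move=> w; have := ipl 1 0 0 w; rewrite scale1r addr0 mul1r => h.
  by apply: (@addrI _ (ip 0 w)); rewrite addr0 -h.
have ip0r : forall w, ip w 0 = 0.
  by move=> w; rewrite ipc ip0l ?conjC0 ?rmorph0.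
have ipDr : forall x y z, ip x (y + z) = ip x y + ip x z.
  move=> x y z; rewrite ipc; have := ipl 1 y z x; rewrite scale1r mul1r => ->.
  by rewrite [ip x y]ipc [ip x z]ipc rmorphD.
have ipsumr : forall x (F : 'I_l -> V), ip x (\sum_i F i) = \sum_i ip x (F i).
  move=> x F; exact: (big_morph (ip x) (ipDr x) (ip0r x)).
have Uslin : forall (a : R[i]) x y, Ustar (a *: x + y) = a *: Ustar x + Ustar y.
  move=> a x y; case: hUb => [hl _].
  by rewrite -{1}(UUs x) -{1}(UUs y) -hl UsU.
have Usb : bounded_op ip Ustar.
  split; first exact: (Uslin).
  exists 1 => x; rewrite mul1r /normH.
  have -> : ip (Ustar x) (Ustar x) = ip x x by rewrite -hUa UUs.
  by [].
have compb : forall A B, bounded_op ip A -> bounded_op ip B -> bounded_op ip (A \o B).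
  move=> A B [hlA [MA hMA]] [hlB [MB hMB]]; split.
    by move=> a x y /=; rewrite hlB hlA.
  exists (Num.max MA 0 * Num.max MB 0) => x /=.
  apply: (le_trans (hMA _)).
  have nn : forall y, 0 <= normH ip y by move=> y; rewrite /normH sqrtr_ge0.
  apply: (le_trans (y := Num.max MA 0 * normH ip (B x))).
    by apply: ler_wpM2r => //; rewrite le_max lexx.
  rewrite -mulrA; apply: ler_wpM2l; first by rewrite le_max lexx orbT.
  apply: (le_trans (hMB _)).
  by apply: ler_wpM2r => //; rewrite le_max lexx.
have psib : forall X, bounded_op ip X -> bounded_op ip (psi X).
  move=> X hX; apply: (compb) => //; apply: (phib); exact: (compb).
have iterb : forall k X, bounded_op ip X -> bounded_op ip (iter k psi X).
  by move=> k X hX; elim: k => [|k IH] //=; apply: (psib).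
have Rss0 : forall i, Rss i 0 = 0.
  by move=> i; apply: (ipd); rewrite -hRs ip0r.
have Us0 : Ustar 0 = 0 by apply: (lin0).
have U0 : U 0 = 0 by apply: (lin0).
split.
- move=> H1.
  pose F k v := ip v (Ustar (iter k psi U v)).
  have Frec : forall k v, F k.+1 v = \sum_i F k (Rs i v).
    move=> k v; rewrite /F iterS /psi hpsi; last exact: (iterb).
    have -> : forall (G : 'I_l -> V), Ustar (\sum_i G i) = \sum_i Ustar (G i).
      move=> G; apply: (big_morph Ustar) => // x y.
      by have := Uslin 1 x y; rewrite !scale1r.
    rewrite ipsumr; apply: eq_bigr => i _.
    by rewrite UsU -hRs.
  have Fge0 : forall k v, 0 <= F k v.
    elim=> [|k IH] v; first by rewrite /F /= UsU ipp.
    by rewrite Frec; apply: sumr_ge0 => i _.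
  have key : forall k v, F k v = 0 -> forall s : seq 'I_l, size s = k ->
      prod_ops Rs s v = 0.
    elim=> [|k IH] v hF s hs.
      by case: s hs => // _; apply: (ipd); move: hF; rewrite /F /= UsU.
    case/lastP: s hs => [//|s i]; rewrite size_rcons => -[hs].
    rewrite prod_ops_rcons; apply: IH => //.
    move: hF; rewrite Frec => hF.
    have H := @psumr_eq0P _ _ xpredT (fun j => F k (Rs j v)) (fun j _ => Fge0 k (Rs j v)) hF. exact: H.
  move=> s v; apply: (key p) => //; last exact: size_tuple.
  by rewrite /F H1 ?Us0 ?ip0r.
- move=> H2.
  have Q : forall k X, bounded_op ip X ->
      (forall s : seq 'I_l, size s = k -> forall w, X (prod_ops Rs s w) = 0) ->
      forall v, iter k psi X v = 0.
    elim=> [|k IH] X hX hs v.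
      by have := hs [::] erefl v.
    rewrite iterSr; apply: IH; first exact: (psib).
    move=> s ss w; rewrite /psi hpsi //; apply: big1 => i _.
    have -> : Rs i (prod_ops Rs s w) = prod_ops Rs (i :: s) w by [].
    by rewrite hs /= ?ss // Us0 Rss0 U0.
  move=> X hX v; apply: Q => // s ss w.
  have hs : size s == p by rewrite ss.
  by have := H2 (Tuple hs) w => /= ->; apply: (lin0).
Qed.
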